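(* Let $\bar\delta\ge1$ be an integer and $\pi$ the switching policy $(\bar\delta,0)$ (transmit in $(1,1,0)$, in every state $(0,1,\delta)$, $\delta\ge1$, and in $(1,0,\delta)$ for $\delta\ge\bar\delta$). Define $A=\frac{p\bar q^{\bar\delta-1}}{1-\bar qp_f}$, $a_1=\frac{p(1-\bar q^{\bar\delta-1})}{1-\bar q}+A$, $b_1=\frac{qp_f}{1-\bar pp_f}$, $B=\frac{q}{\bar p(1-\bar pp_f)}$, $D=(1+a_1)\bar pB+(1+b_1)\bar qA$. Then the stationary distribution of $\{S_t\}$ under $\pi$ is $\nu_{0,0,0}=\bar pB/D$, $\nu_{1,1,0}=\bar qA/D$, $\nu_{1,0,k}=p\bar q^{k-1}\nu_{0,0,0}$ for $1\le k\le\bar\delta$ and $\nu_{1,0,k}=p\bar q^{\bar\delta-1}(\bar qp_f)^{k-\bar\delta}\nu_{0,0,0}$ for $k>\bar\delta$, $\nu_{0,1,k}=qp_f(\bar pp_f)^{k-1}\nu_{1,1,0}$ for $k\ge1$. Moreover, $$\mathcal L(\pi)=\beta p\,\psi(\bar q,\bar\delta)\,\nu_{0,0,0}+\frac{(1-\beta)qp_f\nu_{1,1,0}}{(1-\bar pp_f)^2}+\lambda\big(A\nu_{0,0,0}+(1+b_1)\nu_{1,1,0}\big),$$ where $\psi(x,y)=\frac{1-(x+(1-x)y)x^{y-1}}{(1-x)^2}+\frac{(xp_f+(1-xp_f)y)x^{y-1}}{(1-xp_f)^2}$.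
   Context: Fix $p,q\in(0,1)$, $\bar p=1-p$, $\bar q=1-q$. The source $\{X_t\}$ is a Markov chain on $\{0,1\}$ with $\Pr[X_{t+1}=1\mid X_t=0]=p$, $\Pr[X_{t+1}=0\mid X_t=1]=q$; channel i.i.d. Bernoulli with success probability $p_s\in(0,1]$, independent of the source, $p_f=1-p_s$. Estimate dynamics: if $A_t=1$ and the transmission succeeds then $\hat X_{t+1}=X_{t+1}$, otherwise $\hat X_{t+1}=\hat X_t$. Age: $\Delta_{t+1}=\Delta_t+1$ if $X_{t+1}\ne\hat X_{t+1}$, else $0$. State $S_t=(X_t,\hat X_t,\Delta_t)\in\mathcal S=\{(0,0,0),(1,1,0)\}\cup\{(1,0,\delta),(0,1,\delta):\delta\ge1\}$, $S_1=(0,0,0)$; $\nu_{i,j,\delta}$ is the stationary probability of $(i,j,\delta)$. Per-state cost $c(s)=\beta\delta$ for $s=(1,0,\delta)$, $(1-\beta)\delta$ for $s=(0,1,\delta)$, $0$ for synced states, $\beta\in[0,1]$; per-stage cost $\ell(s,a)=\mathbb E[c(S_{t+1})\mid S_t=s,A_t=a]+\lambda\mathbb 1\{a=1\}$, $\lambda\ge0$; average cost $\mathcal L(\pi)=\limsup_{T\to\infty}\frac1T\sum_{t=1}^T\mathbb E^\pi[\ell(S_t,A_t)\mid S_1=(0,0,0)]$. The switching policy $(\bar\delta,\underline\delta)$ ($\bar\delta,\underline\delta\ge0$ integers) transmits iff $S_t=(1,0,\delta)$ with $\delta\ge\bar\delta$, or $S_t=(0,1,\delta)$ with $\delta\ge\underline\delta$,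 or ($\bar\delta=0$ and $S_t=(0,0,0)$), or ($\underline\delta=0$ and $S_t=(1,1,0)$). *)

(* Defs.v *)
From Stdlib Require Import Reals Lra.
From Coquelicot Require Import Coquelicot.
Open Scope R_scope.

(* A state (x, xh, delta) : bool encodes {0,1} (true = 1). *)
Definition state := (bool * bool * nat)%type.

Definition inS (s : state) : Prop :=
  match s with
  | (false, false, d) => d = 0%nat
  | (true, true, d) => d = 0%nat
  | (_, _, d) => (1 <= d)%nat
  end.

Definition sumS (f : state -> R) : R :=
  f (false, false, 0%nat) + f (true, true, 0%nat)
  + Series (fun n => f (true, false, S n))
  + Series (fun n => f (false, true, S n)).

Definition summableS (f : state -> R) : Prop :=
  ex_series (fun n => f (true, false, S n)) /\
  ex_series (fun n => f (false, true, S n)).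

(* Source Markov chain: Pr[X_{t+1} = y | X_t = x]. *)
Definition src (p q : R) (x y : bool) : R :=
  match x, y with
  | false, true => p
  | false, false => 1 - p
  | true, false => q
  | true, true => 1 - q
  end.

(* Next state given X_{t+1} = y, estimate xh' and current age d. *)
Definition nextst (y xh' : bool) (d : nat) : state :=
  (y, xh', if Bool.eqb y xh' then 0%nat else S d).

(* E[f(S_{t+1}) | S_t = s, A_t = a s] for a stationary deterministic
   policy a; ps = success probability of the channel. *)
Definition expnext (p q ps : R) (a : state -> bool) (f : state -> R)
  (s : state) : R :=
  let '(x, xh, d) := s in
  src p q x false *
    (if a s then ps * f (nextst false false d) + (1 - ps) * f (nextst false xh d)
     else f (nextst false xh d))
  + src p q x true *
    (if a s then ps * f (nextst true true d) + (1 - ps) * f (nextst true xh d)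
     else f (nextst true xh d)).

Definition state_eqb (s t : state) : bool :=
  let '(x, h, d) := s in let '(x', h', d') := t in
  Bool.eqb x x' && Bool.eqb h h' && Nat.eqb d d'.

Definition trans (p q ps : R) (a : state -> bool) (s s' : state) : R :=
  expnext p q ps a (fun t => if state_eqb t s' then 1 else 0) s.

Definition switching (dbar dund : nat) (s : state) : bool :=
  match s with
  | (true, false, d) => Nat.leb dbar d
  | (false, true, d) => Nat.leb dund d
  | (false, false, _) => Nat.eqb dbar 0
  | (true, true, _) => Nat.eqb dund 0
  end.

Definition cost (beta : R) (s : state) : R :=
  match s with
  | (true, false, d) => beta * INR d
  | (false, true, d) => (1 - beta) * INR d
  | _ => 0
  end.

Definition stage_cost (p q ps beta lam : R) (a : state -> bool) (s : state) : R :=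
  expnext p q ps a (cost beta) s + lam * (if a s then 1 else 0).

(* dist t = law of S_{t+1} (so dist 0 is the law of S_1 = (0,0,0)). *)
Fixpoint dist (p q ps : R) (a : state -> bool) (t : nat) : state -> R :=
  match t with
  | O => fun s => if state_eqb s (false, false, 0%nat) then 1 else 0
  | S t' => fun s' => sumS (fun s => dist p q ps a t' s * trans p q ps a s s')
  end.

(* Average cost L(pi) = limsup_T (1/T) sum_{t=1}^T E[l(S_t, A_t)]
   (the sequence is indexed by T-1). *)
Definition avg_cost (p q ps beta lam : R) (a : state -> bool) : Rbar :=
  LimSup_seq (fun T =>
    / (INR T + 1) *
    sum_n (fun t => sumS (fun s => dist p q ps a t s * stage_cost p q ps beta lam a s)) T).

Definition stationary (p q ps : R) (a : state -> bool) (nu : state -> R) : Prop :=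
  (forall s, inS s -> 0 <= nu s) /\
  summableS nu /\ sumS nu = 1 /\
  (forall s', inS s' ->
     summableS (fun s => nu s * trans p q ps a s s') /\
     sumS (fun s => nu s * trans p q ps a s s') = nu s').

Definition psi (pf x : R) (y : nat) : R :=
  (1 - (x + (1 - x) * INR y) * x ^ (y - 1)) / (1 - x) ^ 2
  + (x * pf + (1 - x * pf) * INR y) * x ^ (y - 1) / (1 - x * pf) ^ 2.

(* Main.v *)
Require Import Defs.
From Stdlib Require Import Reals.
From Coquelicot Require Import Coquelicot.
From Stdlib Require Import Lra Lia.
Open Scope R_scope.

Fixpoint fs (f : nat -> R) (n : nat) : R :=
  match n with O => 0 | S m => fs f m + f m end.

Lemma fs_ext f g n : (forall k, f k = g k) -> fs f n = fs g n.
Proof. intros H; induction n; simpl; [reflexivity| rewrite IHn, H; reflexivity]. Qed.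

Lemma fs_plus f g n : fs (fun k => f k + g k) n = fs f n + fs g n.
Proof. induction n; simpl; [ring| rewrite IHn; ring]. Qed.

Lemma fs_scal c f n : fs (fun k => c * f k) n = c * fs f n.
Proof. induction n; simpl; [ring| rewrite IHn; ring]. Qed.

Lemma fs_shift f n : fs f (S n) = f O + fs (fun k => f (S k)) n.
Proof. induction n; simpl in *; [ring| rewrite IHn; ring]. Qed.

Lemma fs_le f g n : (forall k, f k <= g k) -> fs f n <= fs g n.
Proof. intros H; induction n; simpl; [lra| specialize (H n); lra]. Qed.

Lemma fs_zero f n : (forall k, f k = 0) -> fs f n = 0.
Proof. intros H; induction n; simpl; [lra| rewrite IHn, H; ring]. Qed.

Lemma fs_tail f N M : (forall k, (N <= k)%nat -> f k = 0) -> (N <= M)%nat -> fs f M = fs f N.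
Proof. intros H HM; induction HM; simpl; [reflexivity| rewrite IHHM, H; [ring| lia]]. Qed.

Lemma sum_n_fs f m : sum_n f m = fs f (S m).
Proof.
  induction m.
  - rewrite sum_O; simpl. rewrite Rplus_0_l; reflexivity.
  - rewrite sum_Sn, IHm. simpl. reflexivity.
Qed.

Lemma is_series_fin f N : (forall k, (N <= k)%nat -> f k = 0) -> is_series f (fs f N).
Proof.
  intros H. unfold is_series.
  apply (filterlim_ext_loc (fun _ => fs f N)).
  - exists N. intros n Hn. rewrite sum_n_fs.
    symmetry; apply fs_tail; auto; lia.
  - apply filterlim_const.
Qed.

Lemma Series_fin f N : (forall k, (N <= k)%nat -> f k = 0) -> Series f = fs f N.
Proof. intros H; apply is_series_unique, is_series_fin, H. Qed.

Lemma ex_series_fin f N : (forall k, (N <= k)%nat -> f k = 0) -> ex_series f.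
Proof. intros H; eexists; apply (is_series_fin f N H). Qed.

Lemma fs_spike f m : (forall n, n <> m -> f n = 0) -> fs f (S m) = f m.
Proof.
  intros H. simpl. enough (fs f m = 0) by lra.
  assert (forall j, (j <= m)%nat -> fs f j = 0).
  { induction j; intros Hj; simpl; [reflexivity|]. rewrite IHj by lia. rewrite H by lia. ring. }
  apply H0; lia.
Qed.

Lemma Series_spike f m : (forall n, n <> m -> f n = 0) -> Series f = f m /\ ex_series f.
Proof.
  intros H. assert (H1 : forall k, (S m <= k)%nat -> f k = 0) by (intros k Hk; apply H; lia).
  split; [|exact (ex_series_fin _ _ H1)].
  rewrite (Series_fin f (S m) H1). apply fs_spike, H.
Qed.

Lemma Series_zero f : (forall n, f n = 0) -> Series f = 0 /\ ex_series f.
Proof.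
  intros H. split.
  - rewrite (Series_fin f 0); [reflexivity| intros; apply H].
  - apply (ex_series_fin f 0); intros; apply H.
Qed.

Lemma fs_geom x n : fs (fun k => x ^ k) n * (1 - x) = 1 - x ^ n.
Proof. induction n; simpl; [ring| rewrite Rmult_plus_distr_r, IHn; ring]. Qed.

Lemma fs_ext_lt f g n : (forall k, (k < n)%nat -> f k = g k) -> fs f n = fs g n.
Proof. intros H; induction n; simpl; [reflexivity|]. rewrite IHn, H; [reflexivity|lia|intros; apply H; lia]. Qed.

Definition rr (q ps : R) (dbar n : nat) := if Nat.leb dbar (S n) then (1-q)*ps else 0.
Definition cc (q ps : R) (dbar n : nat) := if Nat.leb dbar (S n) then (1-q)*(1-ps) else 1-q.



Lemma ex000 p q ps dbar f : (1 <= dbar)%nat ->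
  expnext p q ps (switching dbar 0) f (false,false,0%nat) =
  (1-p) * f (false,false,0%nat) + p * f (true,false,1%nat).
Proof.
  intros H. unfold expnext, switching, nextst. destruct dbar; [lia|]. simpl. ring.
Qed.

Lemma ex110 p q ps dbar f :
  expnext p q ps (switching dbar 0) f (true,true,0%nat) =
  q * (ps * f (false,false,0%nat) + (1-ps) * f (false,true,1%nat)) + (1-q) * f (true,true,0%nat).
Proof. unfold expnext, switching, nextst. simpl. ring. Qed.

Lemma exX p q ps dbar f n :
  expnext p q ps (switching dbar 0) f (true,false,S n) =
  q * f (false,false,0%nat) + rr q ps dbar n * f (true,true,0%nat)
  + cc q ps dbar n * f (true,false,S (S n)).
Proof. unfold expnext, switching, nextst, rr, cc. simpl. destruct (Nat.leb dbar (S n)); ring. Qed.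

Lemma exY p q ps dbar f n :
  expnext p q ps (switching dbar 0) f (false,true,S n) =
  (1-p) * (ps * f (false,false,0%nat) + (1-ps) * f (false,true,S (S n))) + p * f (true,true,0%nat).
Proof. unfold expnext, switching, nextst. simpl. ring. Qed.

Definition prm (p q ps : R) := 0 < p < 1 /\ 0 < q < 1 /\ 0 < ps <= 1.

Ltac trs := unfold trans; rewrite ?ex110, ?exX, ?exY; simpl.

Lemma Series_mulr f c : Series (fun n => f n * c) = c * Series f.
Proof. rewrite <- Series_scal_l. apply Series_ext; intros; ring. Qed.

Lemma ex_series_mulr f c : ex_series f -> ex_series (fun n => f n * c).
Proof. intros H. apply (ex_series_ext (fun n => scal c (f n))).
  intros; unfold scal; simpl; unfold mult; simpl; ring. apply (@ex_series_scal_l R_AbsRing R_NormedModule), H. Qed.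

Lemma bal000 p q ps dbar mu : (1 <= dbar)%nat -> summableS mu ->
  let f := fun s => mu s * trans p q ps (switching dbar 0) s (false,false,0%nat) in
  summableS f /\
  sumS f = (1-p) * mu (false,false,0%nat) + q*ps * mu (true,true,0%nat)
    + q * Series (fun n => mu (true,false,S n)) + (1-p)*ps * Series (fun n => mu (false,true,S n)).
Proof.
  intros Hd [H1 H2] f. unfold f, summableS, sumS.
  assert (E1 : forall n, mu (true,false,S n) * trans p q ps (switching dbar 0) (true,false,S n) (false,false,0%nat)
     = mu (true,false,S n) * q) by (intros; trs; ring).
  assert (E2 : forall n, mu (false,true,S n) * trans p q ps (switching dbar 0) (false,true,S n) (false,false,0%nat)
     = mu (false,true,S n) * ((1-p)*ps)) by (intros; trs; ring).
  split; [split|].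
  - eapply ex_series_ext; [intros n; symmetry; apply E1|]. apply ex_series_mulr, H1.
  - eapply ex_series_ext; [intros n; symmetry; apply E2|]. apply ex_series_mulr, H2.
  - rewrite (Series_ext _ _ E1), (Series_ext _ _ E2), !Series_mulr.
    unfold trans. rewrite ex000 by exact Hd. rewrite ex110. simpl. ring.
Qed.

Lemma rr_bnd p q ps dbar n : prm p q ps -> 0 <= rr q ps dbar n <= 1.
Proof. intros (?&?&?). unfold rr. destruct (Nat.leb dbar (S n)); nra. Qed.
Lemma cc_bnd p q ps dbar n : prm p q ps -> 0 <= cc q ps dbar n <= 1 - q.
Proof. intros (?&?&?). unfold cc. destruct (Nat.leb dbar (S n)); nra. Qed.

Lemma bal110 p q ps dbar mu : (1 <= dbar)%nat -> prm p q ps -> summableS mu ->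
  (forall n, 0 <= mu (true,false,S n)) ->
  let f := fun s => mu s * trans p q ps (switching dbar 0) s (true,true,0%nat) in
  summableS f /\
  sumS f = (1-q) * mu (true,true,0%nat)
    + Series (fun n => rr q ps dbar n * mu (true,false,S n)) + p * Series (fun n => mu (false,true,S n)).
Proof.
  intros Hd Hp [H1 H2] Hn f. unfold f, summableS, sumS.
  assert (E1 : forall n, mu (true,false,S n) * trans p q ps (switching dbar 0) (true,false,S n) (true,true,0%nat)
     = rr q ps dbar n * mu (true,false,S n)) by (intros; trs; ring).
  assert (E2 : forall n, mu (false,true,S n) * trans p q ps (switching dbar 0) (false,true,S n) (true,true,0%nat)
     = mu (false,true,S n) * p) by (intros; trs; ring).
  split; [split|].
  - eapply ex_series_ext; [intros n; symmetry; apply E1|].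
    apply (@ex_series_le R_AbsRing R_CompleteNormedModule _ (fun n => mu (true,false,S n))); [|exact H1].
    intros n. change (norm (rr q ps dbar n * mu (true, false, S n))) with (Rabs (rr q ps dbar n * mu (true, false, S n))).
    pose proof (rr_bnd p q ps dbar n Hp). specialize (Hn n).
    rewrite Rabs_pos_eq by nra. nra.
  - eapply ex_series_ext; [intros n; symmetry; apply E2|]. apply ex_series_mulr, H2.
  - rewrite (Series_ext _ _ E1), (Series_ext _ _ E2), !Series_mulr.
    unfold trans. rewrite ex000 by exact Hd. rewrite ex110. simpl. ring.
Qed.

Lemma balX p q ps dbar mu k : (1 <= dbar)%nat ->
  let f := fun s => mu s * trans p q ps (switching dbar 0) s (true,false,S k) in
  summableS f /\
  sumS f = match k with O => p * mu (false,false,0%nat)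
           | S j => cc q ps dbar j * mu (true,false,S j) end.
Proof.
  intros Hd f. unfold f, summableS, sumS.
  assert (E2 : forall n, mu (false,true,S n) * trans p q ps (switching dbar 0) (false,true,S n) (true,false,S k)
     = 0) by (intros; trs; ring).
  destruct (Series_zero _ E2) as [S2 X2].
  destruct k as [|j].
  - assert (E1 : forall n, mu (true,false,S n) * trans p q ps (switching dbar 0) (true,false,S n) (true,false,1%nat)
     = 0) by (intros; trs; ring).
    destruct (Series_zero _ E1) as [S1 X1].
    split; [split; assumption|]. rewrite S1, S2.
    unfold trans. rewrite ex000 by exact Hd. rewrite ex110. simpl. ring.
  - assert (E1 : forall n, n <> j -> mu (true,false,S n) * trans p q ps (switching dbar 0) (true,false,S n) (true,false,S (S j))
     = 0).
    { intros n Hn; trs. destruct (Nat.eqb_spec n j); [lia|]. ring. }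
    destruct (Series_spike _ _ E1) as [S1 X1].
    split; [split; assumption|]. rewrite S1, S2.
    unfold trans. rewrite ex000 by exact Hd. rewrite ex110, exX. simpl. rewrite Nat.eqb_refl. ring.
Qed.

Lemma balY p q ps dbar mu k : (1 <= dbar)%nat ->
  let f := fun s => mu s * trans p q ps (switching dbar 0) s (false,true,S k) in
  summableS f /\
  sumS f = match k with O => q * (1-ps) * mu (true,true,0%nat)
           | S j => (1-p)*(1-ps) * mu (false,true,S j) end.
Proof.
  intros Hd f. unfold f, summableS, sumS.
  assert (E1 : forall n, mu (true,false,S n) * trans p q ps (switching dbar 0) (true,false,S n) (false,true,S k)
     = 0) by (intros; trs; ring).
  destruct (Series_zero _ E1) as [S1 X1].
  destruct k as [|j].
  - assert (E2 : forall n, mu (false,true,S n) * trans p q ps (switching dbar 0) (false,true,S n) (false,true,1%nat)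
     = 0) by (intros; trs; ring).
    destruct (Series_zero _ E2) as [S2 X2].
    split; [split; assumption|]. rewrite S1, S2.
    unfold trans. rewrite ex000 by exact Hd. rewrite ex110. simpl. ring.
  - assert (E2 : forall n, n <> j -> mu (false,true,S n) * trans p q ps (switching dbar 0) (false,true,S n) (false,true,S (S j))
     = 0).
    { intros n Hn; trs. destruct (Nat.eqb_spec n j); [lia|]. ring. }
    destruct (Series_spike _ _ E2) as [S2 X2].
    split; [split; assumption|]. rewrite S1, S2.
    unfold trans. rewrite ex000 by exact Hd. rewrite ex110, exY. simpl. rewrite Nat.eqb_refl. ring.
Qed.

Lemma is_series_shift f m l : is_series (fun k => f (m + k)%nat) l -> is_series f (fs f m + l).
Proof.
  revert f l; induction m; intros f l H.
  - simpl. rewrite Rplus_0_l. exact H.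
  - apply is_series_decr_1.
    match goal with |- is_series _ ?v => replace v with (fs (fun k => f (S k)) m + l) end.
    + apply IHm. exact H.
    + rewrite fs_shift. unfold plus, opp; simpl. unfold plus, opp; simpl. ring.
Qed.

Lemma is_series_cgeom c r : Rabs r < 1 -> is_series (fun k => c * r ^ k) (c / (1 - r)).
Proof.
  intros H. pose proof (@is_series_scal_l R_AbsRing R_NormedModule c _ _ (is_series_geom r H)) as H1.
  unfold Rdiv. exact H1.
Qed.

Definition xF (p q ps : R) (dbar : nat) (a : R) (n : nat) : R :=
  if Nat.leb (S n) dbar then a * p * (1-q)^n
  else a * p * (1-q)^(dbar-1) * ((1-q)*(1-ps))^(S n - dbar).
Definition yF (p q ps : R) (b : R) (n : nat) : R := b * q * (1-ps) * ((1-p)*(1-ps))^n.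

Lemma xF_shift p q ps dbar a k : (1 <= dbar)%nat ->
  xF p q ps dbar a (dbar - 1 + k) = a * p * (1-q)^(dbar-1) * ((1-q)*(1-ps))^k.
Proof.
  intros Hd. unfold xF. destruct k.
  - replace (S (dbar - 1 + 0)) with dbar by lia. rewrite Nat.leb_refl.
    replace (dbar - 1 + 0)%nat with (dbar - 1)%nat by lia. simpl. ring.
  - replace (Nat.leb (S (dbar - 1 + S k)) dbar) with false by (symmetry; apply Nat.leb_gt; lia).
    replace (S (dbar - 1 + S k) - dbar)%nat with (S k) by lia. reflexivity.
Qed.

Lemma xF_low p q ps dbar a n : (n < dbar - 1)%nat -> xF p q ps dbar a n = a * p * (1-q)^n.
Proof. intros H. unfold xF. replace (Nat.leb (S n) dbar) with true by (symmetry; apply Nat.leb_le; lia). reflexivity. Qed.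

Lemma rabs01 r : 0 <= r < 1 -> Rabs r < 1.
Proof. intros. rewrite Rabs_pos_eq; lra. Qed.

Lemma xF_series p q ps dbar a : (1 <= dbar)%nat -> prm p q ps ->
  is_series (xF p q ps dbar a)
    (a * (p * (1 - (1-q)^(dbar-1)) / (1 - (1-q)) + p * (1-q)^(dbar-1) / (1 - (1-q)*(1-ps)))).
Proof.
  intros Hd (Hp&Hq&Hps).
  match goal with |- is_series _ ?v => replace v with
     (fs (xF p q ps dbar a) (dbar-1) + (a * p * (1-q)^(dbar-1)) / (1 - (1-q)*(1-ps))) end.
  - apply is_series_shift. eapply is_series_ext; [intros k; symmetry; apply xF_shift, Hd|].
    apply is_series_cgeom, rabs01. split; nra.
  - rewrite (fs_ext_lt _ (fun n => (a*p) * (1-q)^n)).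
    + rewrite fs_scal. pose proof (fs_geom (1-q) (dbar - 1)) as G.
      assert (G2 : fs (fun k => (1-q)^k) (dbar-1) = (1 - (1-q)^(dbar-1)) / (1 - (1-q))).
      { apply (Rmult_eq_reg_r (1 - (1-q))); [|lra]. rewrite G. field. lra. }
      change (fs (pow (1-q)) (dbar-1)) with (fs (fun k => (1-q)^k) (dbar-1)). rewrite G2. field. split; nra.
    + intros k Hk. unfold xF. replace (Nat.leb (S k) dbar) with true by (symmetry; apply Nat.leb_le; lia). ring.
Qed.

Lemma yF_series p q ps b : prm p q ps ->
  is_series (yF p q ps b) (b * (q * (1-ps) / (1 - (1-p)*(1-ps)))).
Proof.
  intros (Hp&Hq&Hps).
  match goal with |- is_series _ ?v => replace v with (b*q*(1-ps) / (1 - (1-p)*(1-ps))) end.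
  - apply is_series_cgeom, rabs01. split; nra.
  - field. nra.
Qed.

Lemma tail_series p q ps dbar a : (1 <= dbar)%nat -> prm p q ps ->
  is_series (fun n => rr q ps dbar n * xF p q ps dbar a n)
    (a * ((1-q)*ps * (p * (1-q)^(dbar-1) / (1 - (1-q)*(1-ps))))).
Proof.
  intros Hd (Hp&Hq&Hps).
  match goal with |- is_series _ ?v => replace v with
     (fs (fun n => rr q ps dbar n * xF p q ps dbar a n) (dbar-1) + ((1-q)*ps*(a * p * (1-q)^(dbar-1))) / (1 - (1-q)*(1-ps))) end.
  - apply is_series_shift.
    assert (E : forall k, ((1-q)*ps*(a * p * (1-q)^(dbar-1))) * ((1-q)*(1-ps))^k =
       rr q ps dbar (dbar - 1 + k) * xF p q ps dbar a (dbar - 1 + k)).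
    { intros k. rewrite xF_shift by exact Hd. unfold rr.
      replace (Nat.leb dbar (S (dbar - 1 + k))) with true by (symmetry; apply Nat.leb_le; lia). ring. }
    apply (is_series_ext _ _ _ E).
    apply is_series_cgeom, rabs01. split; nra.
  - rewrite (fs_ext_lt _ (fun _ => 0)), fs_zero; [field; nra| reflexivity|].
    intros k Hk. unfold rr. replace (Nat.leb dbar (S k)) with false by (symmetry; apply Nat.leb_gt; lia). ring.
Qed.

Lemma xF_rec p q ps dbar a n : (1 <= dbar)%nat ->
  xF p q ps dbar a (S n) = cc q ps dbar n * xF p q ps dbar a n.
Proof.
  intros Hd. unfold xF, cc.
  destruct (Nat.leb_spec (S (S n)) dbar); destruct (Nat.leb_spec (S n) dbar);
  destruct (Nat.leb_spec dbar (S n)); try lia.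
  - simpl. ring.
  - replace (S (S n) - dbar)%nat with 1%nat by lia. replace (dbar - 1)%nat with n by lia. simpl. ring.
  - replace (S (S n) - dbar)%nat with (S (S n - dbar)) by lia. simpl. ring.
Qed.

Lemma yF_rec p q ps b n : yF p q ps b (S n) = (1-p)*(1-ps) * yF p q ps b n.
Proof. unfold yF. simpl. ring. Qed.

Definition nuS p q ps dbar (a b : R) (s : state) : R :=
  match s with
  | (false,false,_) => a
  | (true,true,_) => b
  | (true,false,O) => 0
  | (true,false,S n) => xF p q ps dbar a n
  | (false,true,O) => 0
  | (false,true,S n) => yF p q ps b n
  end.

Lemma xF_nonneg p q ps dbar a n : prm p q ps -> 0 <= a -> 0 <= xF p q ps dbar a n.
Proof.
  intros (Hp&Hq&Hps) Ha. unfold xF. destruct (Nat.leb (S n) dbar).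
  - apply Rmult_le_pos; [nra|]. apply pow_le; lra.
  - apply Rmult_le_pos; [apply Rmult_le_pos; [nra|apply pow_le; lra]|]. apply pow_le; nra.
Qed.

Lemma yF_nonneg p q ps b n : prm p q ps -> 0 <= b -> 0 <= yF p q ps b n.
Proof.
  intros (Hp&Hq&Hps) Hb. unfold yF. apply Rmult_le_pos; [|apply pow_le; nra].
  apply Rmult_le_pos; nra.
Qed.

Definition a1e p q ps dbar := p * (1 - (1-q)^(dbar-1)) / (1 - (1-q)) + p * (1-q)^(dbar-1) / (1 - (1-q)*(1-ps)).
Definition b1e p q ps := q * (1-ps) / (1 - (1-p)*(1-ps)).
Definition te p q ps dbar := (1-q)*ps * (p * (1-q)^(dbar-1) / (1 - (1-q)*(1-ps))).

Lemma inS_cases (P : state -> Prop) :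
  P (false,false,0%nat) -> P (true,true,0%nat) -> (forall n, P (true,false,S n)) ->
  (forall n, P (false,true,S n)) -> forall s, inS s -> P s.
Proof.
  intros H1 H2 H3 H4 [[x h] d] Hs. destruct x, h; simpl in Hs.
  - subst; auto.
  - destruct d; [lia|auto].
  - destruct d; [lia|auto].
  - subst; auto.
Qed.

Lemma exist_stat p q ps dbar a b : (1 <= dbar)%nat -> prm p q ps -> 0 <= a -> 0 <= b ->
  b = (1-q)*b + a * te p q ps dbar + p * (b * b1e p q ps) ->
  a = (1-p)*a + q*ps*b + q * (a * a1e p q ps dbar) + (1-p)*ps*(b * b1e p q ps) ->
  a + b + a * a1e p q ps dbar + b * b1e p q ps = 1 ->
  stationary p q ps (switching dbar 0) (nuS p q ps dbar a b).
Proof.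
  intros Hd Hp Ha Hb E1 E0 EN.
  pose proof (xF_series p q ps dbar a Hd Hp) as SX.
  pose proof (yF_series p q ps b Hp) as SY.
  pose proof (tail_series p q ps dbar a Hd Hp) as ST.
  assert (Hsum : summableS (nuS p q ps dbar a b)).
  { split; simpl; eexists; eassumption. }
  assert (SX' : Series (fun n => nuS p q ps dbar a b (true,false,S n)) = a * a1e p q ps dbar)
    by (apply is_series_unique; exact SX).
  assert (SY' : Series (fun n => nuS p q ps dbar a b (false,true,S n)) = b * b1e p q ps)
    by (apply is_series_unique; exact SY).
  split; [|split; [exact Hsum|split]].
  - apply inS_cases; simpl; auto; intros; [apply xF_nonneg|apply yF_nonneg]; auto.
  - unfold sumS. rewrite SX', SY'. simpl. lra.
  - apply inS_cases.
    + destruct (bal000 p q ps dbar (nuS p q ps dbar a b) Hd Hsum) as [B1 B2].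
      split; [exact B1|]. rewrite B2, SX', SY'. simpl. lra.
    + destruct (bal110 p q ps dbar (nuS p q ps dbar a b) Hd Hp Hsum) as [B1 B2].
      { intros; simpl; apply xF_nonneg; auto. }
      split; [exact B1|]. rewrite B2, SY'. simpl.
      rewrite (is_series_unique _ _ ST). unfold te in E1. lra.
    + intros n. destruct (balX p q ps dbar (nuS p q ps dbar a b) n Hd) as [B1 B2].
      split; [exact B1|]. rewrite B2. destruct n; simpl.
      * unfold xF. destruct dbar; [lia|]. simpl. ring.
      * rewrite xF_rec by exact Hd. reflexivity.
    + intros n. destruct (balY p q ps dbar (nuS p q ps dbar a b) n Hd) as [B1 B2].
      split; [exact B1|]. rewrite B2. destruct n; simpl.
      * unfold yF. simpl. ring.
      * rewrite yF_rec. reflexivity.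
Qed.

Lemma uniq_stat p q ps dbar nu : (1 <= dbar)%nat -> prm p q ps ->
  stationary p q ps (switching dbar 0) nu ->
  (forall n, nu (true,false,S n) = xF p q ps dbar (nu (false,false,0%nat)) n) /\
  (forall n, nu (false,true,S n) = yF p q ps (nu (true,true,0%nat)) n) /\
  nu (true,true,0%nat) = (1-q)*nu (true,true,0%nat) + nu (false,false,0%nat) * te p q ps dbar
     + p * (nu (true,true,0%nat) * b1e p q ps) /\
  nu (false,false,0%nat) + nu (true,true,0%nat) + nu (false,false,0%nat) * a1e p q ps dbar
     + nu (true,true,0%nat) * b1e p q ps = 1.
Proof.
  intros Hd Hp [Hnn [Hsum [Hone Hbal]]].
  set (a := nu (false,false,0%nat)). set (b := nu (true,true,0%nat)).
  assert (HX : forall n, nu (true,false,S n) = xF p q ps dbar a n).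
  { induction n.
    - destruct (Hbal (true,false,1%nat) (le_n 1)) as [_ B].
      destruct (balX p q ps dbar nu 0 Hd) as [_ B2]. rewrite <- B, B2.
      unfold xF. destruct dbar; [lia|]. simpl. fold a. ring.
    - destruct (Hbal (true,false,S (S n)) ltac:(simpl; lia)) as [_ B].
      destruct (balX p q ps dbar nu (S n) Hd) as [_ B2]. rewrite <- B, B2, IHn, xF_rec by exact Hd. reflexivity. }
  assert (HY : forall n, nu (false,true,S n) = yF p q ps b n).
  { induction n.
    - destruct (Hbal (false,true,1%nat) (le_n 1)) as [_ B].
      destruct (balY p q ps dbar nu 0 Hd) as [_ B2]. rewrite <- B, B2.
      unfold yF. simpl. fold b. ring.
    - destruct (Hbal (false,true,S (S n)) ltac:(simpl; lia)) as [_ B].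
      destruct (balY p q ps dbar nu (S n) Hd) as [_ B2]. rewrite <- B, B2, IHn, yF_rec. reflexivity. }
  assert (SX : Series (fun n => nu (true,false,S n)) = a * a1e p q ps dbar).
  { rewrite (Series_ext _ _ HX). apply is_series_unique, xF_series; auto. }
  assert (SY : Series (fun n => nu (false,true,S n)) = b * b1e p q ps).
  { rewrite (Series_ext _ _ HY). apply is_series_unique, yF_series; auto. }
  split; [exact HX|split; [exact HY|split]].
  - destruct (Hbal (true,true,0%nat) eq_refl) as [_ B].
    destruct (bal110 p q ps dbar nu Hd Hp Hsum) as [_ B2].
    { intros n. apply (Hnn (true,false,S n)). simpl; lia. }
    rewrite B2, SY in B. fold b in B.
    rewrite (Series_ext _ (fun n => rr q ps dbar n * xF p q ps dbar a n)) in B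
      by (intros; rewrite HX; reflexivity).
    rewrite (is_series_unique _ _ (tail_series p q ps dbar a Hd Hp)) in B.
    unfold te. lra.
  - unfold sumS in Hone. rewrite SX, SY in Hone. fold a b in Hone. lra.
Qed.

Definition dd p q ps dbar t := Defs.dist p q ps (switching dbar 0) t.

Definition supp (mu : state -> R) (N : nat) :=
  forall n, (N <= n)%nat -> mu (true,false,S n) = 0 /\ mu (false,true,S n) = 0.

Definition nnS (mu : state -> R) := forall s, inS s -> 0 <= mu s.

Lemma sumS_fin mu f N : supp mu N ->
  sumS (fun s => mu s * f s) =
  mu (false,false,0%nat) * f (false,false,0%nat) + mu (true,true,0%nat) * f (true,true,0%nat)
  + fs (fun n => mu (true,false,S n) * f (true,false,S n)) N
  + fs (fun n => mu (false,true,S n) * f (false,true,S n)) N.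
Proof.
  intros H. unfold sumS. rewrite (Series_fin _ N), (Series_fin (fun n => mu (false,true,S n) * _) N).
  reflexivity.
  - intros k Hk. rewrite (proj2 (H k Hk)). ring.
  - intros k Hk. rewrite (proj1 (H k Hk)). ring.
Qed.

Lemma supp_summable mu N : supp mu N -> summableS mu.
Proof.
  intros H. split; apply (ex_series_fin _ N); intros k Hk; apply H, Hk.
Qed.

Lemma fs_nonneg f n : (forall k, 0 <= f k) -> 0 <= fs f n.
Proof. intros H. rewrite <- (fs_zero (fun _ => 0) n) by reflexivity. apply fs_le, H. Qed.

Lemma dist_props p q ps dbar t : (1 <= dbar)%nat -> prm p q ps ->
  supp (dd p q ps dbar t) t /\ nnS (dd p q ps dbar t).
Proof.
  intros Hd Hp. induction t as [|t [IHs IHn]].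
  - split.
    + intros n _. unfold dd; simpl. split; reflexivity.
    + red; apply (inS_cases (fun s => 0 <= dd p q ps dbar 0 s)); intros; unfold dd; simpl; lra.
  - assert (Hsum := supp_summable _ _ IHs).
    assert (Hx : forall n, 0 <= dd p q ps dbar t (true,false,S n)) by (intros n; apply (IHn (true,false,S n)); simpl; lia).
    assert (Hy : forall n, 0 <= dd p q ps dbar t (false,true,S n)) by (intros n; apply (IHn (false,true,S n)); simpl; lia).
    assert (H0 : 0 <= dd p q ps dbar t (false,false,0%nat)) by (apply (IHn (false,false,0%nat)); reflexivity).
    assert (H1 : 0 <= dd p q ps dbar t (true,true,0%nat)) by (apply (IHn (true,true,0%nat)); reflexivity).
    destruct Hp as (Hp1&Hq1&Hps1).
    split.
    + intros n Hn. destruct n as [|j]; [lia|]. split.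
      * change (dd p q ps dbar (S t) (true,false,S (S j))) with
          (sumS (fun s => dd p q ps dbar t s * trans p q ps (switching dbar 0) s (true,false,S (S j)))).
        destruct (balX p q ps dbar (dd p q ps dbar t) (S j) Hd) as [_ B]. rewrite B.
        rewrite (proj1 (IHs j ltac:(lia))). ring.
      * change (dd p q ps dbar (S t) (false,true,S (S j))) with
          (sumS (fun s => dd p q ps dbar t s * trans p q ps (switching dbar 0) s (false,true,S (S j)))).
        destruct (balY p q ps dbar (dd p q ps dbar t) (S j) Hd) as [_ B]. rewrite B.
        rewrite (proj2 (IHs j ltac:(lia))). ring.
    + red; apply (inS_cases (fun s => 0 <= dd p q ps dbar (S t) s)).
      * change (dd p q ps dbar (S t) (false,false,0%nat)) with
          (sumS (fun s => dd p q ps dbar t s * trans p q ps (switching dbar 0) s (false,false,0%nat))).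
        destruct (bal000 p q ps dbar (dd p q ps dbar t) Hd Hsum) as [_ B]. rewrite B.
        rewrite !(Series_fin _ t) by (intros k Hk; apply IHs, Hk).
        pose proof (fs_nonneg _ t Hx). pose proof (fs_nonneg _ t Hy).
        assert (0 <= q*ps) by nra. assert (0 <= (1-p)*ps) by nra.
        apply Rplus_le_le_0_compat; [apply Rplus_le_le_0_compat; [apply Rplus_le_le_0_compat|]|];
          apply Rmult_le_pos; lra.
      * change (dd p q ps dbar (S t) (true,true,0%nat)) with
          (sumS (fun s => dd p q ps dbar t s * trans p q ps (switching dbar 0) s (true,true,0%nat))).
        destruct (bal110 p q ps dbar (dd p q ps dbar t) Hd (conj Hp1 (conj Hq1 Hps1)) Hsum Hx) as [_ B]. rewrite B.
        rewrite !(Series_fin _ t) by (intros k Hk; rewrite ?(proj1 (IHs k Hk)), ?(proj2 (IHs k Hk)); ring).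
        pose proof (fs_nonneg _ t Hy).
        assert (0 <= fs (fun n => rr q ps dbar n * dd p q ps dbar t (true,false,S n)) t).
        { apply fs_nonneg. intros k. apply Rmult_le_pos; [apply (rr_bnd p q ps dbar k); split; auto|auto]. }
        apply Rplus_le_le_0_compat; [apply Rplus_le_le_0_compat|]; try apply Rmult_le_pos; lra.
      * intros n.
        change (dd p q ps dbar (S t) (true,false,S n)) with
          (sumS (fun s => dd p q ps dbar t s * trans p q ps (switching dbar 0) s (true,false,S n))).
        destruct (balX p q ps dbar (dd p q ps dbar t) n Hd) as [_ B]. rewrite B.
        destruct n; [nra|]. apply Rmult_le_pos; auto. apply (cc_bnd p q ps dbar n); split; auto.
      * intros n.
        change (dd p q ps dbar (S t) (false,true,S n)) with
          (sumS (fun s => dd p q ps dbar t s * trans p q ps (switching dbar 0) s (false,true,S n))).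
        destruct (balY p q ps dbar (dd p q ps dbar t) n Hd) as [_ B]. rewrite B.
        destruct n; apply Rmult_le_pos; auto; nra.
Qed.



Lemma dist_step p q ps dbar t : (1 <= dbar)%nat -> prm p q ps ->
  let mu := dd p q ps dbar t in let mu' := dd p q ps dbar (S t) in
  mu' (false,false,0%nat) = (1-p) * mu (false,false,0%nat) + q*ps * mu (true,true,0%nat)
    + q * fs (fun n => mu (true,false,S n)) t + (1-p)*ps * fs (fun n => mu (false,true,S n)) t /\
  mu' (true,true,0%nat) = (1-q) * mu (true,true,0%nat)
    + fs (fun n => rr q ps dbar n * mu (true,false,S n)) t + p * fs (fun n => mu (false,true,S n)) t /\
  mu' (true,false,1%nat) = p * mu (false,false,0%nat) /\
  (forall j, mu' (true,false,S (S j)) = cc q ps dbar j * mu (true,false,S j)) /\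
  mu' (false,true,1%nat) = q * (1-ps) * mu (true,true,0%nat) /\
  (forall j, mu' (false,true,S (S j)) = (1-p)*(1-ps) * mu (false,true,S j)).
Proof.
  intros Hd Hp mu mu'.
  destruct (dist_props p q ps dbar t Hd Hp) as [Hs Hn].
  assert (Hsum := supp_summable _ _ Hs).
  assert (Hx : forall n, 0 <= mu (true,false,S n)) by (intros n; apply (Hn (true,false,S n)); simpl; lia).
  assert (E : forall s', mu' s' = sumS (fun s => mu s * trans p q ps (switching dbar 0) s s')) by reflexivity.
  split; [|split; [|split; [|split; [|split]]]].
  - rewrite E. destruct (bal000 p q ps dbar mu Hd Hsum) as [_ B]. rewrite B.
    rewrite !(Series_fin _ t) by (intros k Hk; apply Hs, Hk). reflexivity.
  - rewrite E. destruct (bal110 p q ps dbar mu Hd Hp Hsum Hx) as [_ B]. rewrite B.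
    rewrite (Series_fin (fun n => rr q ps dbar n * mu (true, false, S n)) t),
      (Series_fin (fun n => mu (false, true, S n)) t); [reflexivity| |];
      intros k Hk; destruct (Hs k Hk) as [Z1 Z2]; unfold mu; rewrite ?Z1, ?Z2; ring.
  - rewrite E. destruct (balX p q ps dbar mu 0 Hd) as [_ B]. exact B.
  - intros j. rewrite E. destruct (balX p q ps dbar mu (S j) Hd) as [_ B]. exact B.
  - rewrite E. destruct (balY p q ps dbar mu 0 Hd) as [_ B]. exact B.
  - intros j. rewrite E. destruct (balY p q ps dbar mu (S j) Hd) as [_ B]. exact B.
Qed.

Lemma duality p q ps dbar t h : (1 <= dbar)%nat -> prm p q ps ->
  sumS (fun s => dd p q ps dbar (S t) s * h s) =
  sumS (fun s => dd p q ps dbar t s * expnext p q ps (switching dbar 0) h s).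
Proof.
  intros Hd Hp.
  destruct (dist_step p q ps dbar t Hd Hp) as (D0&D1&DX0&DX&DY0&DY).
  rewrite (sumS_fin _ _ (S t)) by (apply dist_props; auto).
  rewrite (sumS_fin _ _ t) by (apply dist_props; auto).
  set (mu := dd p q ps dbar t) in *. set (mu' := dd p q ps dbar (S t)) in *.
  rewrite !fs_shift. rewrite DX0, DY0, D0, D1.
  rewrite (fs_ext (fun k => mu' (true,false,S (S k)) * h (true,false,S (S k)))
                  (fun k => cc q ps dbar k * mu (true,false,S k) * h (true,false,S (S k))))
    by (intros k; rewrite (DX k); ring).
  rewrite (fs_ext (fun k => mu' (false,true,S (S k)) * h (false,true,S (S k)))
                  (fun k => ((1-p)*(1-ps)) * (mu (false,true,S k) * h (false,true,S (S k)))))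
    by (intros k; rewrite (DY k); ring).
  rewrite ex000 by exact Hd. rewrite ex110.
  rewrite (fs_ext (fun n => mu (true,false,S n) * expnext p q ps (switching dbar 0) h (true,false,S n))
     (fun n => (q * h (false,false,0%nat)) * mu (true,false,S n) + (h (true,true,0%nat) * (rr q ps dbar n * mu (true,false,S n))
        + cc q ps dbar n * mu (true,false,S n) * h (true,false,S (S n)))))
    by (intros; rewrite exX; ring).
  rewrite (fs_ext (fun n => mu (false,true,S n) * expnext p q ps (switching dbar 0) h (false,true,S n))
     (fun n => ((1-p)*ps*h (false,false,0%nat) + p * h (true,true,0%nat)) * mu (false,true,S n)
        + ((1-p)*(1-ps)) * (mu (false,true,S n) * h (false,true,S (S n)))))
    by (intros; rewrite exY; ring).
  rewrite !fs_plus, !fs_scal. ring.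
Qed.

Lemma sumS_ext f g : (forall s, inS s -> f s = g s) -> sumS f = sumS g.
Proof.
  intros H. unfold sumS. rewrite (H (false,false,0%nat)), (H (true,true,0%nat)) by reflexivity.
  rewrite (Series_ext (fun n => f (true,false,S n)) (fun n => g (true,false,S n))),
    (Series_ext (fun n => f (false,true,S n)) (fun n => g (false,true,S n))); [reflexivity| |];
    intros n; apply H; simpl; lia.
Qed.

Definition Et p q ps dbar t (f : state -> R) := sumS (fun s => dd p q ps dbar t s * f s).

Lemma Et_lin p q ps dbar t c1 c2 f g : (1 <= dbar)%nat -> prm p q ps ->
  Et p q ps dbar t (fun s => c1 * f s + c2 * g s) = c1 * Et p q ps dbar t f + c2 * Et p q ps dbar t g.
Proof.
  intros Hd Hp. unfold Et. rewrite !(sumS_fin _ _ t) by (apply dist_props; auto).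
  rewrite (fs_ext (fun n => dd p q ps dbar t (true,false,S n) * (c1 * f (true,false,S n) + c2 * g (true,false,S n)))
    (fun n => c1 * (dd p q ps dbar t (true,false,S n) * f (true,false,S n)) + c2 * (dd p q ps dbar t (true,false,S n) * g (true,false,S n))))
    by (intros; ring).
  rewrite (fs_ext (fun n => dd p q ps dbar t (false,true,S n) * (c1 * f (false,true,S n) + c2 * g (false,true,S n)))
    (fun n => c1 * (dd p q ps dbar t (false,true,S n) * f (false,true,S n)) + c2 * (dd p q ps dbar t (false,true,S n) * g (false,true,S n))))
    by (intros; ring).
  rewrite !fs_plus, !fs_scal. ring.
Qed.

Lemma Et_mono p q ps dbar t f g : (1 <= dbar)%nat -> prm p q ps ->
  (forall s, inS s -> f s <= g s) -> Et p q ps dbar t f <= Et p q ps dbar t g.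
Proof.
  intros Hd Hp H. destruct (dist_props p q ps dbar t Hd Hp) as [Hs Hn].
  unfold Et. rewrite !(sumS_fin _ _ t) by exact Hs.
  assert (forall s, inS s -> dd p q ps dbar t s * f s <= dd p q ps dbar t s * g s).
  { intros s Hs'. apply Rmult_le_compat_l; [apply Hn|apply H]; exact Hs'. }
  pose proof (H0 (false,false,0%nat) eq_refl). pose proof (H0 (true,true,0%nat) eq_refl).
  assert (fs (fun n => dd p q ps dbar t (true,false,S n) * f (true,false,S n)) t <=
          fs (fun n => dd p q ps dbar t (true,false,S n) * g (true,false,S n)) t)
    by (apply fs_le; intros; apply H0; simpl; lia).
  assert (fs (fun n => dd p q ps dbar t (false,true,S n) * f (false,true,S n)) t <=
          fs (fun n => dd p q ps dbar t (false,true,S n) * g (false,true,S n)) t)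
    by (apply fs_le; intros; apply H0; simpl; lia).
  lra.
Qed.

Lemma Et_ext p q ps dbar t f g : (forall s, inS s -> f s = g s) -> Et p q ps dbar t f = Et p q ps dbar t g.
Proof. intros H. unfold Et. apply sumS_ext. intros s Hs. rewrite H; auto. Qed.

Lemma Et_dual p q ps dbar t h : (1 <= dbar)%nat -> prm p q ps ->
  Et p q ps dbar (S t) h = Et p q ps dbar t (expnext p q ps (switching dbar 0) h).
Proof. intros; apply duality; auto. Qed.

Lemma Et_one p q ps dbar t : (1 <= dbar)%nat -> prm p q ps -> Et p q ps dbar t (fun _ => 1) = 1.
Proof.
  intros Hd Hp. induction t.
  - unfold Et. rewrite (sumS_fin _ _ 0) by (apply dist_props; auto). unfold dd. simpl. ring.
  - rewrite Et_dual by auto. transitivity (Et p q ps dbar t (fun _ => 1)); [|exact IHt]. apply Et_ext. intros [[x h] d] _.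
    unfold expnext. destruct (switching dbar 0 (x,h,d)); destruct x; simpl; ring.
Qed.

Definition V (s : state) : R := INR (snd s).

Lemma Et_V p q ps dbar t : (1 <= dbar)%nat -> prm p q ps ->
  Et p q ps dbar t V <= / (1 - Rmax (1-q) (1-p)).
Proof.
  intros Hd Hp. pose proof Hp as (Hp1&Hq1&Hps1).
  set (r := Rmax (1-q) (1-p)).
  assert (Hr : 1 - q <= r /\ 1 - p <= r /\ r < 1).
  { unfold r. split; [apply Rmax_l|split; [apply Rmax_r|]]. apply Rmax_lub_lt; lra. }
  assert (HM : 0 < / (1 - r)) by (apply Rinv_0_lt_compat; lra).
  induction t.
  - unfold Et. rewrite (sumS_fin _ _ 0) by (apply dist_props; auto). unfold dd, V. simpl. lra.
  - rewrite Et_dual by auto.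
    apply Rle_trans with (Et p q ps dbar t (fun s => r * V s + 1 * (fun _ => 1) s)).
    + apply Et_mono; auto. apply inS_cases.
      * rewrite ex000 by auto. unfold V. simpl. lra.
      * rewrite ex110. unfold V. simpl. nra.
      * intros n. rewrite exX. unfold V; cbn [snd]. rewrite !S_INR. change (INR 0) with 0.
        pose proof (pos_INR n). pose proof (cc_bnd p q ps dbar n Hp). nra.
      * intros n. rewrite exY. unfold V; cbn [snd]. rewrite !S_INR. change (INR 0) with 0.
        pose proof (pos_INR n). assert ((1-p)*(1-ps) <= r) by nra. assert ((1-p)*(1-ps)*(INR n + 1 + 1) <= r * (INR n + 1 + 1)) by (apply Rmult_le_compat_r; lra). nra.
    + rewrite Et_lin by auto. rewrite Et_one by auto.
      assert (r * / (1 - r) + 1 = / (1 - r)) by (field; lra).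
      assert (0 <= r) by lra. nra.
Qed.

Lemma Rabs_le_inv a b : Rabs a <= b -> - b <= a <= b.
Proof. unfold Rabs. destruct (Rcase_abs a); lra. Qed.

Lemma lim_inv : is_lim_seq (fun n => / (INR n + 1)) 0.
Proof.
  assert (H : is_lim_seq (fun n => INR n + 1) p_infty).
  { apply (is_lim_seq_ext (fun n => INR (S n))). intros; apply S_INR.
    apply (is_lim_seq_incr_1 INR p_infty). exact is_lim_seq_INR. }
  pose proof (is_lim_seq_inv _ _ H) as H1. simpl in H1. apply H1. discriminate.
Qed.

Lemma avg_poisson p q ps beta lam dbar g h C1 C2 : (1 <= dbar)%nat -> prm p q ps -> 0 <= C2 ->
  (forall s, inS s -> stage_cost p q ps beta lam (switching dbar 0) s
       = g + h s - expnext p q ps (switching dbar 0) h s) ->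
  (forall s, inS s -> Rabs (h s) <= C1 + C2 * V s) ->
  avg_cost p q ps beta lam (switching dbar 0) = Finite g.
Proof.
  intros Hd Hp HC2 HP HB.
  set (E := Et p q ps dbar).
  assert (Hl : forall t, sumS (fun s => Defs.dist p q ps (switching dbar 0) t s * stage_cost p q ps beta lam (switching dbar 0) s)
     = g + E t h - E (S t) h).
  { intros t. change (sumS _) with (Et p q ps dbar t (stage_cost p q ps beta lam (switching dbar 0))).
    rewrite (Et_ext _ _ _ _ _ _ (fun s => g * (fun _ => 1) s + 1 * (fun s => h s - expnext p q ps (switching dbar 0) h s) s))
      by (intros; rewrite HP; auto; ring).
    rewrite Et_lin, Et_one by auto.
    rewrite (Et_ext _ _ _ _ _ _ (fun s => 1 * h s + (-1) * expnext p q ps (switching dbar 0) h s))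
      by (intros; ring).
    rewrite Et_lin by auto. unfold E. rewrite Et_dual by auto. ring. }
  set (M := / (1 - Rmax (1-q) (1-p))).
  assert (Hb : forall t, Rabs (E t h) <= C1 + C2 * M).
  { intros t. pose proof (Et_V p q ps dbar t Hd Hp) as HV. fold M in HV.
    assert (U : E t h <= Et p q ps dbar t (fun s => C1 * (fun _ => 1) s + C2 * V s)).
    { unfold E. apply Et_mono; auto. intros s Hs. specialize (HB s Hs). apply Rabs_le_inv in HB. lra. }
    assert (L : Et p q ps dbar t (fun s => (-1) * h s + 0 * V s) <= Et p q ps dbar t (fun s => C1 * (fun _ => 1) s + C2 * V s)).
    { apply Et_mono; auto. intros s Hs. specialize (HB s Hs). apply Rabs_le_inv in HB. lra. }
    rewrite !Et_lin, Et_one in L by auto. rewrite Et_lin, Et_one in U by auto.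
    assert (C2 * Et p q ps dbar t V <= C2 * M) by (apply Rmult_le_compat_l; auto).
    apply Rabs_le. unfold E in *. lra. }
  assert (Hs : forall T, sum_n (fun t => sumS (fun s => Defs.dist p q ps (switching dbar 0) t s * stage_cost p q ps beta lam (switching dbar 0) s)) T
     = (INR T + 1) * g + E 0%nat h - E (S T) h).
  { induction T.
    - rewrite sum_O, Hl. simpl. ring.
    - rewrite sum_Sn, IHT, Hl. rewrite S_INR. unfold plus; simpl. ring. }
  unfold avg_cost. apply is_LimSup_seq_unique, is_lim_LimSup_seq.
  set (K := Rabs (E 0%nat h) + (C1 + C2 * M)).
  assert (H0 : is_lim_seq (fun n => K * / (INR n + 1)) 0).
  { pose proof (is_lim_seq_scal_l _ K _ lim_inv) as H. simpl in H. rewrite Rmult_0_r in H. exact H. }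
  apply (is_lim_seq_le_le (fun n => g - K * / (INR n + 1)) _ (fun n => g + K * / (INR n + 1))).
  - intros n. rewrite Hs.
    assert (Hn : 0 < INR n + 1) by (pose proof (pos_INR n); lra).
    replace (/ (INR n + 1) * ((INR n + 1) * g + E 0%nat h - E (S n) h))
      with (g + (E 0%nat h - E (S n) h) * / (INR n + 1)) by (field; lra).
    pose proof (Hb (S n)). pose proof (Rabs_pos (E (S n) h)).
    assert (HK : Rabs (E 0%nat h - E (S n) h) <= K).
    { unfold K. eapply Rle_trans; [apply Rabs_triang|]. rewrite Rabs_Ropp. lra. }
    apply Rabs_le_inv in HK. pose proof (Rinv_0_lt_compat _ Hn) as Hi.
    set (w := E 0%nat h - E (S n) h) in *. set (z := / (INR n + 1)) in *.
    assert (w * z <= K * z) by (apply Rmult_le_compat_r; lra).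
    assert (- K * z <= w * z) by (apply Rmult_le_compat_r; lra).
    split; lra.
  - replace (Finite g) with (Finite (g - 0)) by (f_equal; ring).
    apply is_lim_seq_minus'; [apply is_lim_seq_const|]. exact H0.
  - replace (Finite g) with (Finite (g + 0)) by (f_equal; ring).
    apply is_lim_seq_plus'; [apply is_lim_seq_const|]. exact H0.
Qed.

Definition uP q be := (1-q)*be/q.
Definition vP q be g := ((1-q)*be - g + (1-q)*uP q be)/q.
Definition al2P q ps be := (1-q)*(1-ps)*be/(1-(1-q)*(1-ps)).
Definition alP p ps be := (1-p)*(1-ps)*(1-be)/(1-(1-p)*(1-ps)).
Definition h1P p q ps be la g := (1-(1-p)*(1-ps))/(q*ps)*((q*(1-ps)*(1-be)+la) - g + q*(1-ps)*alP p ps be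
   + q*(1-ps)*(alP p ps be + la - g)/(1-(1-p)*(1-ps))).
Definition ga2P p q ps be la g := (al2P q ps be + la - g + (1-q)*ps*h1P p q ps be la g)/(1-(1-q)*(1-ps)).
Definition gaP p q ps be la g := (alP p ps be + la - g + p*h1P p q ps be la g)/(1-(1-p)*(1-ps)).
Definition KP p q ps be la g dbar := al2P q ps be * INR dbar + ga2P p q ps be la g - uP q be * INR dbar - vP q be g.
Definition hP p q ps be la g dbar (s : state) : R :=
  match s with
  | (false,false,_) => 0
  | (true,true,_) => h1P p q ps be la g
  | (true,false,k) => if Nat.leb k dbar then uP q be * INR k + vP q be g + KP p q ps be la g dbar * (1-q)^(dbar-k)
                      else al2P q ps be * INR k + ga2P p q ps be la g
  | (false,true,k) => alP p ps be * INR k + gaP p q ps be la g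
  end.

Lemma poisson p q ps be la g dbar : (1 <= dbar)%nat -> prm p q ps ->
  g = p*be + p*(uP q be + vP q be g + KP p q ps be la g dbar * (1-q)^(dbar-1)) ->
  forall s, inS s -> stage_cost p q ps be la (switching dbar 0) s
       = g + hP p q ps be la g dbar s - expnext p q ps (switching dbar 0) (hP p q ps be la g dbar) s.
Proof.
  intros Hd (Hp&Hq&Hps) Hg.
  assert (N1 : 1 - (1-q)*(1-ps) <> 0) by nra.
  assert (N2 : 1 - (1-p)*(1-ps) <> 0) by nra.
  assert (N3 : q <> 0) by lra. assert (N4 : ps <> 0) by lra.
  apply inS_cases; unfold stage_cost.
  - rewrite !ex000 by auto. unfold switching. destruct dbar; [lia|]. simpl.
    unfold cost. simpl (INR 1).
    rewrite Nat.sub_0_r in *. simpl in Hg. rewrite Nat.sub_0_r in Hg. rewrite !Rmult_1_r. lra.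
  - rewrite !ex110. unfold switching. simpl. unfold cost. simpl (INR 1). simpl (INR 0).
    unfold gaP, h1P. field. auto.
  - intros n. rewrite !exX. unfold switching, rr, cc, hP, cost.
    destruct (Nat.leb_spec dbar (S n)).
    + replace (Nat.leb (S (S n)) dbar) with false by (symmetry; apply Nat.leb_gt; lia).
      destruct (Nat.leb_spec (S n) dbar).
      * replace n with (dbar - 1)%nat by lia. replace (S (dbar - 1)) with dbar by lia.
        rewrite Nat.sub_diag. rewrite !S_INR. unfold KP, ga2P, al2P. simpl. field. auto.
      * rewrite !S_INR. unfold ga2P, al2P. field. auto.
    + replace (Nat.leb (S (S n)) dbar) with true by (symmetry; apply Nat.leb_le; lia).
      replace (Nat.leb (S n) dbar) with true by (symmetry; apply Nat.leb_le; lia).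
      replace (dbar - S n)%nat with (S (dbar - S (S n))) by lia.
      rewrite !S_INR. unfold vP, uP. simpl. field. auto.
  - intros n. rewrite !exY. unfold switching, hP, cost. rewrite !S_INR.
    unfold gaP, alP. simpl. field. auto.
Qed.

Lemma pow_le_1 x n : 0 <= x <= 1 -> x ^ n <= 1.
Proof. intros. rewrite <- (pow1 n). apply pow_incr; lra. Qed.

Lemma abs3 u k v K c : 0 <= k -> Rabs c <= 1 -> Rabs (u * k + v + K * c) <= Rabs u * k + Rabs v + Rabs K.
Proof.
  intros Hk Hc. eapply Rle_trans; [apply Rabs_triang|]. eapply Rle_trans; [apply Rplus_le_compat_r, Rabs_triang|].
  rewrite !Rabs_mult, (Rabs_pos_eq k Hk). pose proof (Rabs_pos K). nra.
Qed.

Lemma abs2 u k v : 0 <= k -> Rabs (u * k + v) <= Rabs u * k + Rabs v.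
Proof. intros Hk. eapply Rle_trans; [apply Rabs_triang|]. rewrite Rabs_mult, (Rabs_pos_eq k Hk). lra. Qed.

Lemma hP_bound p q ps be la g dbar : prm p q ps ->
  let C2 := Rabs (uP q be) + Rabs (al2P q ps be) + Rabs (alP p ps be) in
  let C1 := Rabs (vP q be g) + Rabs (KP p q ps be la g dbar) + Rabs (ga2P p q ps be la g)
            + Rabs (gaP p q ps be la g) + Rabs (h1P p q ps be la g) in
  0 <= C2 /\ forall s, inS s -> Rabs (hP p q ps be la g dbar s) <= C1 + C2 * V s.
Proof.
  intros (Hp&Hq&Hps) C2 C1.
  pose proof (Rabs_pos (uP q be)). pose proof (Rabs_pos (al2P q ps be)). pose proof (Rabs_pos (alP p ps be)).
  pose proof (Rabs_pos (vP q be g)). pose proof (Rabs_pos (KP p q ps be la g dbar)).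
  pose proof (Rabs_pos (ga2P p q ps be la g)). pose proof (Rabs_pos (gaP p q ps be la g)).
  pose proof (Rabs_pos (h1P p q ps be la g)).
  split; [unfold C2; lra|].
  apply inS_cases; unfold hP, V; cbn [snd].
  - rewrite Rabs_R0. change (INR 0) with 0. unfold C1, C2; lra.
  - change (INR 0) with 0. unfold C1, C2; lra.
  - intros n. pose proof (pos_INR (S n)). destruct (Nat.leb (S n) dbar).
    + assert (Rabs ((1-q)^(dbar - S n)) <= 1).
      { rewrite Rabs_pos_eq by (apply pow_le; lra). apply pow_le_1; lra. }
      eapply Rle_trans; [apply abs3; auto|]. unfold C1, C2. nra.
    + eapply Rle_trans; [apply abs2; auto|]. unfold C1, C2. nra.
  - intros n. pose proof (pos_INR (S n)).
    eapply Rle_trans; [apply abs2; auto|]. unfold C1, C2. nra.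
Qed.

Lemma key2 p q ps be la dbar : prm p q ps -> (1 <= dbar)%nat ->
  let pf := 1 - ps in let pb := 1 - p in let qb := 1 - q in
  let X := (1-q)^(dbar-1) in
  let A := p * X / (1 - qb * pf) in
  let a1 := p * (1 - X) / (1 - qb) + A in
  let b1 := q * pf / (1 - pb * pf) in
  let B := q / (pb * (1 - pb * pf)) in
  let D := (1 + a1) * pb * B + (1 + b1) * qb * A in
  let n0 := pb * B / D in let n1 := qb * A / D in
  let g := be * p * psi pf qb dbar * n0 + (1 - be) * q * pf * n1 / (1 - pb * pf) ^ 2
           + la * (A * n0 + (1 + b1) * n1) in
  g = p*be + p*(uP q be + vP q be g + KP p q ps be la g dbar * X).
Proof.
  intros (Hp&Hq&Hps) Hd pf pb qb X A a1 b1 B D n0 n1 g.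
  assert (HX : 0 < X <= 1).
  { unfold X. split; [apply pow_lt; lra| apply pow_le_1; lra]. }
  assert (H1 : 0 < 1 - qb * pf) by (unfold qb, pf; nra).
  assert (H2 : 0 < 1 - pb * pf) by (unfold pb, pf; nra).
  assert (HA : 0 < A) by (unfold A; apply Rdiv_lt_0_compat; [apply Rmult_lt_0_compat|]; lra).
  assert (Ha1 : 0 <= a1).
  { unfold a1. apply Rplus_le_le_0_compat; [|lra]. unfold qb. apply Rmult_le_pos; [nra|].
    apply Rlt_le, Rinv_0_lt_compat; lra. }
  assert (Hb1 : 0 <= b1) by (unfold b1; apply Rmult_le_pos; [unfold pf; nra|apply Rlt_le, Rinv_0_lt_compat; exact H2]).
  assert (HB : 0 < B) by (unfold B; apply Rdiv_lt_0_compat; [lra| apply Rmult_lt_0_compat; [unfold pb; lra| exact H2]]).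
  assert (HD : 0 < D).
  { unfold D. assert (0 < (1 + a1) * pb * B) by (unfold pb; apply Rmult_lt_0_compat; [apply Rmult_lt_0_compat|]; lra).
    assert (0 < (1 + b1) * qb * A) by (unfold qb; apply Rmult_lt_0_compat; [apply Rmult_lt_0_compat|]; lra). lra. }
  assert (HD' : D <> 0) by lra.
  unfold g, psi, n0, n1, KP, ga2P, h1P, gaP, al2P, alP, vP, uP. fold X. fold qb in HD'.
  unfold D, B, b1, a1, A in HD'. unfold D, B, b1, a1, A. unfold pf, pb, qb in *.
  fold X. clearbody X. field. repeat split; try lra; try nra.
  apply Rgt_not_eq.
  assert (T1: 0 < (1 - (1 - q)) * (1 - (1 - q) * (1 - ps))) by (apply Rmult_lt_0_compat; lra).
  assert (T2: 0 <= p * (1 - X) * (1 - (1 - q) * (1 - ps))) by (apply Rmult_le_pos; [apply Rmult_le_pos|]; lra).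
  assert (T3: 0 < p * X * (1 - (1 - q))) by (apply Rmult_lt_0_compat; [apply Rmult_lt_0_compat|]; lra).
  assert (T4: 0 < (1 - (1 - p) * (1 - ps) + q * (1 - ps)) * (1 - q) * (p * X) * (1 - (1 - q)))
    by (repeat apply Rmult_lt_0_compat; nra).
  assert (0 < ((1 - (1 - q)) * (1 - (1 - q) * (1 - ps)) +
   (p * (1 - X) * (1 - (1 - q) * (1 - ps)) + p * X * (1 - (1 - q)))) * q) by (apply Rmult_lt_0_compat; lra).
  lra.
Qed.

Lemma Dside p q ps X : prm p q ps -> 0 < X <= 1 ->
  ((1 - (1 - q)) * (1 - (1 - q) * (1 - ps)) +
   (p * (1 - X) * (1 - (1 - q) * (1 - ps)) + p * X * (1 - (1 - q)))) * q +
  (1 - (1 - p) * (1 - ps) + q * (1 - ps)) * (1 - q) * (p * X) * (1 - (1 - q)) <> 0.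
Proof.
  intros (Hp&Hq&Hps) HX.
  assert (H1 : 0 < 1 - (1-q) * (1-ps)) by nra.
  apply Rgt_not_eq.
  assert (T1: 0 < (1 - (1 - q)) * (1 - (1 - q) * (1 - ps))) by (apply Rmult_lt_0_compat; lra).
  assert (T2: 0 <= p * (1 - X) * (1 - (1 - q) * (1 - ps))) by (apply Rmult_le_pos; [apply Rmult_le_pos|]; lra).
  assert (T3: 0 < p * X * (1 - (1 - q))) by (apply Rmult_lt_0_compat; [apply Rmult_lt_0_compat|]; lra).
  assert (T4: 0 < (1 - (1 - p) * (1 - ps) + q * (1 - ps)) * (1 - q) * (p * X) * (1 - (1 - q)))
    by (repeat apply Rmult_lt_0_compat; nra).
  assert (0 < ((1 - (1 - q)) * (1 - (1 - q) * (1 - ps)) +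
   (p * (1 - X) * (1 - (1 - q) * (1 - ps)) + p * X * (1 - (1 - q)))) * q) by (apply Rmult_lt_0_compat; lra).
  lra.
Qed.

Theorem lemma2 (p q ps beta lam : R) (dbar : nat)
  (hp : 0 < p < 1) (hq : 0 < q < 1) (hps : 0 < ps <= 1)
  (hbeta : 0 <= beta <= 1) (hlam : 0 <= lam) (hdbar : (1 <= dbar)%nat) :
  let pf := 1 - ps in
  let pb := 1 - p in
  let qb := 1 - q in
  let pi := switching dbar 0 in
  let A := p * qb ^ (dbar - 1) / (1 - qb * pf) in
  let a1 := p * (1 - qb ^ (dbar - 1)) / (1 - qb) + A in
  let b1 := q * pf / (1 - pb * pf) in
  let B := q / (pb * (1 - pb * pf)) in
  let D := (1 + a1) * pb * B + (1 + b1) * qb * A in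
  let nu000 := pb * B / D in
  let nu110 := qb * A / D in
  (exists nu, stationary p q ps pi nu) /\
  (forall nu, stationary p q ps pi nu ->
     nu (false, false, 0%nat) = nu000 /\
     nu (true, true, 0%nat) = nu110 /\
     (forall k, (1 <= k <= dbar)%nat ->
        nu (true, false, k) = p * qb ^ (k - 1) * nu000) /\
     (forall k, (dbar < k)%nat ->
        nu (true, false, k) = p * qb ^ (dbar - 1) * (qb * pf) ^ (k - dbar) * nu000) /\
     (forall k, (1 <= k)%nat ->
        nu (false, true, k) = q * pf * (pb * pf) ^ (k - 1) * nu110)) /\
  avg_cost p q ps beta lam pi =
    Finite (beta * p * psi pf qb dbar * nu000
            + (1 - beta) * q * pf * nu110 / (1 - pb * pf) ^ 2
            + lam * (A * nu000 + (1 + b1) * nu110)).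
Proof.
  intros pf pb qb pi A a1 b1 B D nu000 nu110.
  assert (Hp : prm p q ps) by (split; [|split]; assumption).
  set (X := qb ^ (dbar - 1)) in *.
  assert (HX : 0 < X <= 1).
  { unfold X, qb. split; [apply pow_lt; lra| apply pow_le_1; lra]. }
  assert (H1 : 0 < 1 - qb * pf) by (unfold qb, pf; nra).
  assert (H2 : 0 < 1 - pb * pf) by (unfold pb, pf; nra).
  assert (HA : 0 < A) by (unfold A; apply Rdiv_lt_0_compat; [apply Rmult_lt_0_compat|]; lra).
  assert (Ha1 : 0 <= a1).
  { unfold a1. apply Rplus_le_le_0_compat; [|lra]. unfold qb. apply Rmult_le_pos; [nra|].
    apply Rlt_le, Rinv_0_lt_compat; lra. }
  assert (Hb1 : 0 <= b1) by (unfold b1; apply Rmult_le_pos; [unfold pf; nra|apply Rlt_le, Rinv_0_lt_compat; exact H2]).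
  assert (HB : 0 < B) by (unfold B; apply Rdiv_lt_0_compat; [lra| apply Rmult_lt_0_compat; [unfold pb; lra| exact H2]]).
  assert (HD : 0 < D).
  { unfold D. assert (0 < (1 + a1) * pb * B) by (unfold pb; apply Rmult_lt_0_compat; [apply Rmult_lt_0_compat|]; lra).
    assert (0 < (1 + b1) * qb * A) by (unfold qb; apply Rmult_lt_0_compat; [apply Rmult_lt_0_compat|]; lra). lra. }
  assert (Hn0 : 0 < nu000) by (unfold nu000; apply Rdiv_lt_0_compat; [apply Rmult_lt_0_compat; unfold pb; lra|lra]).
  assert (Hn1 : 0 < nu110) by (unfold nu110; apply Rdiv_lt_0_compat; [apply Rmult_lt_0_compat; unfold qb; lra|lra]).
  assert (Ea1 : a1e p q ps dbar = a1) by reflexivity.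
  assert (Eb1 : b1e p q ps = b1) by reflexivity.
  assert (Ete : te p q ps dbar = qb * ps * A) by (unfold te, A, X, qb, pf in *; field; lra).
  assert (Rel : nu110 * (q * ps / (1 - pb * pf)) = nu000 * (qb * ps * A)).
  { unfold nu110, nu000, B. field. repeat split; try lra; try (unfold pb; lra); try nra. }
  assert (Hb1' : q - p * b1 = q * ps / (1 - pb * pf)) by (unfold b1, pb, pf in *; field; lra).
  assert (Norm : nu000 + nu110 + nu000 * a1 + nu110 * b1 = 1).
  { unfold nu000, nu110. field_simplify_eq; [|lra]. unfold D. ring. }
  split; [|split].
  - exists (nuS p q ps dbar nu000 nu110). apply exist_stat; auto; try lra.
    + assert (E : nu110 * q - p * (nu110 * b1) = nu000 * (qb * ps * A)).
      { rewrite <- Rel, <- Hb1'. ring. }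
      rewrite Ete. change (b1e p q ps) with b1. lra.
    + change (a1e p q ps dbar) with a1. change (b1e p q ps) with b1.
      clear Ete Rel Norm Ea1 Eb1 Hb1'.
      unfold nu000, nu110, D, B, a1, b1, A, pb, pf, qb in *. clearbody X.
      field. repeat split; try lra; try nra. apply Dside; auto.

  - intros nu Hst.
    destruct (uniq_stat p q ps dbar nu hdbar Hp Hst) as (HX'&HY'&E1&EN).
    set (a := nu (false,false,0%nat)) in *. set (b := nu (true,true,0%nat)) in *.
    rewrite Ete in E1. change (b1e p q ps) with b1 in E1. change (a1e p q ps dbar) with a1 in EN.
    set (c := q * ps / (1 - pb * pf)) in *.
    assert (Hc : 0 < c) by (unfold c; apply Rdiv_lt_0_compat; [nra|lra]).
    set (k := (qb * ps * A) / c).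
    assert (Hk : 0 <= k) by (unfold k; apply Rmult_le_pos; [unfold qb; apply Rmult_le_pos; [nra|lra]|apply Rlt_le, Rinv_0_lt_compat; lra]).
    assert (E1' : b * c = a * (qb * ps * A)).
    { rewrite <- Hb1'. unfold qb in *. lra. }
    assert (Hbk : b = a * k).
    { unfold k. apply (Rmult_eq_reg_r c); [|lra]. rewrite E1'. field. lra. }
    assert (Hnk : nu110 = nu000 * k).
    { unfold k. apply (Rmult_eq_reg_r c); [|lra]. rewrite Rel. field. lra. }
    assert (HF : 0 < 1 + a1 + k * (1 + b1)) by nra.
    assert (Ha : a = nu000).
    { assert (a * (1 + a1 + k * (1 + b1)) = 1) by (rewrite Hbk in EN; change (b1e p q ps) with b1 in EN; lra).
      assert (nu000 * (1 + a1 + k * (1 + b1)) = 1) by (rewrite Hnk in Norm; lra).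
      apply (Rmult_eq_reg_r (1 + a1 + k * (1 + b1))); lra. }
    assert (Hb : b = nu110) by (rewrite Hbk, Hnk, Ha; reflexivity).
    split; [exact Ha|split; [exact Hb|split; [|split]]].
    + intros kk Hkk. destruct kk as [|n]; [lia|]. rewrite HX'. unfold xF.
      replace (Nat.leb (S n) dbar) with true by (symmetry; apply Nat.leb_le; lia).
      rewrite Ha. replace (S n - 1)%nat with n by lia. unfold qb. ring.
    + intros kk Hkk. destruct kk as [|n]; [lia|]. rewrite HX'. unfold xF.
      replace (Nat.leb (S n) dbar) with false by (symmetry; apply Nat.leb_gt; lia).
      rewrite Ha. unfold X, qb, pf. ring.
    + intros kk Hkk. destruct kk as [|n]; [lia|]. rewrite HY'. unfold yF.
      rewrite Hb. replace (S n - 1)%nat with n by lia. unfold pb, pf. ring.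
  - destruct (hP_bound p q ps beta lam (beta * p * psi pf qb dbar * nu000
            + (1 - beta) * q * pf * nu110 / (1 - pb * pf) ^ 2
            + lam * (A * nu000 + (1 + b1) * nu110)) dbar Hp) as [HC2 HBd].
    pose proof (key2 p q ps beta lam dbar Hp hdbar) as K2.
    unfold pi. eapply avg_poisson; [exact hdbar|exact Hp|exact HC2| |exact HBd].
    apply poisson; auto.
Qed.
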